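(* Let $t_0\in(0,1)$, $\alpha_a,\alpha_b\in\mathbb{R}$, and restrict the quasimomentum to the diagonal $\theta=(\theta_1,-\theta_1)$, $\theta_1\in[-\pi,\pi]$, so that $F=1+e^{i\theta_1}+e^{-i\theta_1}=1+2\cos\theta_1$ is real. Consider the four branches $$r(F)=\frac{-\alpha_a-\alpha_b\pm\sqrt{4(F-s\,t_0^2)^2+(\alpha_a-\alpha_b)^2}}{2(3+t_0^2)},\qquad s\in\{+1,-1\},$$ which are the roots in $\eta$ of $\det M_2^{AA'}(\eta,\theta)=0$, where, with $T=3+t_0^2$, $$M_2^{AA'}(\eta,\theta)=\begin{pmatrix}-T\eta-\alpha_a&\bar F&0&t_0^2\\ F&-T\eta-\alpha_b&t_0^2&0\\ 0&t_0^2&-T\eta-\alpha_a&\bar F\\ t_0^2&0&F&-T\eta-\alpha_b\end{pmatrix}.$$ Then (a) if $\alpha_a=\alpha_b\ne0$, the dispersion relation of $H_2^{AA'}$ always has Dirac cones at $F=\pm t_0^2$; (b) if $\alpha_a\ne\alpha_b$, the dispersion relation of $H_2^{AA'}$ has no touch, i.e. it always has gaps.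
   Context: $H_2^{AA'}$ is the Schrödinger operator $-u''+q_0u$ (with $q_0$ continuous and even on $[0,1]$) on a periodic quantum graph formed by two identical hexagonal layers (edges of length 1, vertices alternately of type $A$ and type $B$) stacked in $AA'$ fashion: each type-$A$ vertex of one layer is joined by a vertical edge to a type-$B$ vertex of the other layer and vice versa. At each vertex the modified Neumann condition holds: $u_{a_1}(v)=u_{a_2}(v)=u_f(v)/t_0$ for in-layer edges $a_i$ and vertical edges $f$, and $\sum_a u_a'(v)\pm\sum_f t_0u_f'(v)=\delta_vu(v)$, with $\delta_v=\delta_a$ at type-$A$ and $\delta_b$ at type-$B$ vertices. For $\lambda$ outside the Dirichlet spectrum, with $\varphi_0,\varphi_1$ solutions of $-\varphi''+q_0\varphi=\lambda\varphi$ with $\varphi_0(0)=1,\varphi_0(1)=0,\varphi_1(0)=0,\varphi_1(1)=1$, set $\eta=\varphi_1'(1)/\varphi_1'(0)$ and $\alpha_k=\delta_k/\varphi_1'(0)$ (treated as real constants); $\lambda\in\sigma(H_2^{AA'})$ iff $\det M_2^{AA'}(\eta(\lambda),\theta)=0$ for some $\theta\in[-\pi,\pi]^2$, and the dispersion relation is identified with the root branches. A Dirac cone is a point $F_D$ where two branches meet with $r(F)-r(F_D)=\pm\gamma|F-F_D|+O(|F-F_D|^2)$, $\gamma\ne0$; gaps means no two branches touch. *)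

(* Defs.v *)
From Stdlib Require Import Reals.
Open Scope R_scope.

Definition sgn (b : bool) : R := if b then 1 else -1.

(* F = 1 + e^{i th} + e^{-i th} = 1 + 2 cos th on the diagonal theta = (th,-th) *)
Definition Fdiag (th : R) : R := 1 + 2 * cos th.

Definition branch (t0 aa ab : R) (s pm : bool) (F : R) : R :=
  (- aa - ab + sgn pm * sqrt (4 * (F - sgn s * t0 ^ 2) ^ 2 + (aa - ab) ^ 2))
  / (2 * (3 + t0 ^ 2)).

Definition dirac_cone (r1 r2 : R -> R) (FD : R) : Prop :=
  (exists th, - PI <= th <= PI /\ Fdiag th = FD) /\
  r1 FD = r2 FD /\
  exists gamma C delta : R, gamma <> 0 /\ 0 < delta /\
    forall th, - PI <= th <= PI -> Rabs (Fdiag th - FD) < delta ->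
      Rabs (r1 (Fdiag th) - r1 FD - gamma * Rabs (Fdiag th - FD))
        <= C * (Fdiag th - FD) ^ 2 /\
      Rabs (r2 (Fdiag th) - r2 FD + gamma * Rabs (Fdiag th - FD))
        <= C * (Fdiag th - FD) ^ 2.

(* Main.v *)
Require Import Defs.
From Stdlib Require Import Reals Lra.
Open Scope R_scope.

Lemma sqrt_key (x : R) : sqrt (4 * x ^ 2 + 0 ^ 2) = 2 * Rabs x.
Proof.
  replace (4 * x ^ 2 + 0 ^ 2) with ((2 * Rabs x) ^ 2).
  - apply sqrt_pow2. pose proof (Rabs_pos x); lra.
  - rewrite <- (pow2_abs x). ring.
Qed.

Lemma branch_eq (t0 a : R) (s pm : bool) (F : R) :
  branch t0 a a s pm F =
  (- a - a + sgn pm * (2 * Rabs (F - sgn s * t0 ^ 2))) / (2 * (3 + t0 ^ 2)).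
Proof.
  unfold branch. replace (a - a) with 0 by ring. rewrite sqrt_key. reflexivity.
Qed.

Theorem mainTheorem4 (t0 aa ab : R) :
  0 < t0 < 1 ->
  (* (a) Dirac cones at F = s t0^2, s = +1, -1 *)
  (aa = ab -> aa <> 0 ->
     forall s : bool,
       dirac_cone (branch t0 aa ab s true) (branch t0 aa ab s false) (sgn s * t0 ^ 2))
  /\
  (* (b) gaps: no upper branch touches a lower branch anywhere on the diagonal *)
  (aa <> ab ->
     forall th : R, - PI <= th <= PI ->
       forall s s' : bool,
         branch t0 aa ab s true (Fdiag th) <> branch t0 aa ab s' false (Fdiag th)).
Proof.
  intros Ht. assert (Hp : 0 < t0 ^ 2) by (apply pow_lt; lra).
  assert (Hq : t0 ^ 2 < 1) by (simpl; nra).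
  assert (HT : 0 < 2 * (3 + t0 ^ 2)) by lra.
  split.
  - intros <- _ s. unfold dirac_cone. split; [|split].
    + set (c := (sgn s * t0 ^ 2 - 1) / 2).
      assert (Hc : -1 <= c <= 1) by (unfold c; destruct s; simpl sgn; split; lra).
      exists (acos c). pose proof (acos_bound c). pose proof PI_RGT_0.
      split; [lra|]. unfold Fdiag. rewrite cos_acos by exact Hc. unfold c. field.
    + rewrite !branch_eq. replace (sgn s * t0 ^ 2 - sgn s * t0 ^ 2) with 0 by ring.
      rewrite Rabs_R0. simpl sgn. field. lra.
    + exists (1 / (3 + t0 ^ 2)), 0, 1. split; [apply Rgt_not_eq; apply Rdiv_lt_0_compat; lra|].
      split; [lra|]. intros th _ _. rewrite !branch_eq.
      replace (sgn s * t0 ^ 2 - sgn s * t0 ^ 2) with 0 by ring.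
      rewrite Rabs_R0. simpl sgn.
      set (u := Rabs (Fdiag th - sgn s * t0 ^ 2)).
      match goal with |- Rabs ?e <= _ /\ Rabs ?f <= _ =>
        replace e with 0 by (field; lra); replace f with 0 by (field; lra) end.
      rewrite Rabs_R0. lra.
  - intros Hne th _ s s'. unfold branch. simpl sgn. intro E.
    assert (H1 : 0 < sqrt (4 * (Fdiag th - sgn s * t0 ^ 2) ^ 2 + (aa - ab) ^ 2)).
    { apply sqrt_lt_R0. assert (0 < (aa - ab) ^ 2) by (assert (aa - ab <> 0) by lra; simpl; rewrite Rmult_1_r; apply Rsqr_pos_lt; assumption).
      assert (0 <= (Fdiag th - sgn s * t0 ^ 2) ^ 2) by apply pow2_ge_0. lra. }
    pose proof (sqrt_pos (4 * (Fdiag th - sgn s' * t0 ^ 2) ^ 2 + (aa - ab) ^ 2)).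
    apply (Rmult_eq_compat_r (2 * (3 + t0 ^ 2))) in E.
    unfold Rdiv in E. rewrite !Rmult_assoc, !Rinv_l in E by lra. lra.
Qed.
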